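(* Let $\mathbb A=(A_n)_{n\in\mathbb Z^+}$ be a sequence of invertible linear operators on $\mathbb R^d$ and $\mathcal S=\{\|\cdot\|_n;\ n\in\mathbb Z^+\}$ a sequence of norms such that there exist $K,a>0$ with $\|\mathcal A(m,n)x\|_m\le Ke^{a(m-n)}\|x\|_n$ and $\|\mathcal A(n,m)x\|_n\le Ke^{a(m-n)}\|x\|_m$ for all $m\ge n$, $x$. Let $\Sigma=\Sigma_{ED,\mathbb A,\mathcal S}$ and let $r_1<r_2$ be in $(0,\infty)\setminus\Sigma$. Then the following are equivalent: (a) $S_{r_1}(n)=S_{r_2}(n)$ for some $n\in\mathbb Z^+$ (equivalently, for all $n\in\mathbb Z^+$); (b) $[r_1,r_2]\cap\Sigma=\emptyset$.
   Context: $\mathbb Z^+=\{0,1,\dots\}$. $\mathcal A(m,n)=A_{m-1}\cdots A_n$ ($m>n$), $\mathrm{Id}$ ($m=n$), $A_m^{-1}\cdots A_{n-1}^{-1}$ ($m<n$). For $r>0$, $n\in\mathbb Z^+$: $S_r(n)=\{v\in\mathbb R^d:\ \sup_{m\ge n}r^{-(m-n)}\|\mathcal A(m,n)v\|_m<+\infty\}$. A sequence $(C_n)_{n\in\mathbb Z^+}$ with cocycle $\mathcal C$ admits a strong exponential dichotomy w.r.t. $\mathcal S$ if there exist $K>0$, $a\ge\lambda>0$ and projections $P_n$ with $C_nP_n=P_{n+1}C_n$ such that for $m\ge n$, $x$, $Q_m=\mathrm{Id}-P_m$: $\|\mathcal C(m,n)P_nx\|_m\le Ke^{-\lambda(m-n)}\|x\|_n$,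 $\|\mathcal C(n,m)Q_mx\|_n\le Ke^{-\lambda(m-n)}\|x\|_m$, $\|\mathcal C(m,n)x\|_m\le Ke^{a(m-n)}\|x\|_n$, $\|\mathcal C(n,m)x\|_n\le Ke^{a(m-n)}\|x\|_m$. $\Sigma_{ED,\mathbb A,\mathcal S}$: set of $\tau>0$ such that $(\tau^{-1}A_n)_{n\in\mathbb Z^+}$ does not admit a strong exponential dichotomy w.r.t. $\mathcal S$. *)

(* Defs.v *)
From HB Require Import structures.
From mathcomp Require Import all_boot all_order all_algebra.
From mathcomp Require Import classical_sets boolp reals sequences exp.
Set Implicit Arguments. Unset Strict Implicit. Unset Printing Implicit Defensive.
Import Order.TTheory GRing.Theory Num.Theory.
Local Open Scope ring_scope.
Local Open Scope classical_set_scope.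

Section Defs.
Variables (R : realType) (d : nat).

Definition is_norm (N : 'cV[R]_d -> R) : Prop :=
  [/\ forall x, 0 <= N x,
      forall x, N x = 0 -> x = 0,
      forall (c : R) x, N (c *: x) = `|c| * N x
    & forall x y, N (x + y) <= N x + N y].

(* fwd A n k = A_{n+k-1} ... A_n  (identity for k = 0) *)
Fixpoint fwd (A : nat -> 'M[R]_d) (n k : nat) : 'M[R]_d :=
  match k with
  | 0 => 1%:M
  | k'.+1 => A (n + k')%N *m fwd A n k'
  end.

(* bwd A m k = A_m^{-1} ... A_{m+k-1}^{-1}  (identity for k = 0) *)
Fixpoint bwd (A : nat -> 'M[R]_d) (m k : nat) : 'M[R]_d :=
  match k with
  | 0 => 1%:M
  | k'.+1 => bwd A m k' *m invmx (A (m + k')%N)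
  end.

Definition cocycle (A : nat -> 'M[R]_d) (m n : nat) : 'M[R]_d :=
  if (n <= m)%N then fwd A n (m - n) else bwd A m (n - m).

Definition S_r (A : nat -> 'M[R]_d) (N : nat -> 'cV[R]_d -> R) (r : R) (n : nat)
  : set 'cV[R]_d :=
  [set v | exists C : R, forall m : nat, (n <= m)%N ->
             r ^- (m - n) * N m (cocycle A m n *m v) <= C].

Definition strong_ED (C : nat -> 'M[R]_d) (N : nat -> 'cV[R]_d -> R) : Prop :=
  exists (K a lam : R) (P : nat -> 'M[R]_d),
    [/\ 0 < K, 0 < lam, lam <= a,
        (forall n, P n *m P n = P n) /\
        (forall n, C n *m P n = P n.+1 *m C n) &
        forall (m n : nat) (x : 'cV[R]_d), (n <= m)%N ->
          [/\ N m (cocycle C m n *m (P n *m x))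
                <= K * expR (- lam * (m - n)%:R) * N n x,
              N n (cocycle C n m *m ((1%:M - P m) *m x))
                <= K * expR (- lam * (m - n)%:R) * N m x,
              N m (cocycle C m n *m x) <= K * expR (a * (m - n)%:R) * N n x
            & N n (cocycle C n m *m x) <= K * expR (a * (m - n)%:R) * N m x]].

Definition Sigma_ED (A : nat -> 'M[R]_d) (N : nat -> 'cV[R]_d -> R) : set R :=
  [set tau | 0 < tau /\ ~ strong_ED (fun n => tau^-1 *: A n) N].

End Defs.

(* Main.v *)
Require Import Defs.
From HB Require Import structures.
From mathcomp Require Import all_boot all_order all_algebra.
From mathcomp Require Import classical_sets boolp reals sequences exp.
Import Order.TTheory GRing.Theory Num.Theory.
Local Open Scope ring_scope.
Local Open Scope classical_set_scope.
Set Implicit Arguments. Unset Strict Implicit.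

Lemma cocycle_fwd (R : realType) d (A : nat -> 'M[R]_d) n k :
  cocycle A (n + k) n = fwd A n k.
Proof. by rewrite /cocycle leq_addr (addnC n k) addnK. Qed.

Lemma cocycle_bwd (R : realType) d (A : nat -> 'M[R]_d) n k :
  cocycle A n (n + k) = bwd A n k.
Proof.
rewrite /cocycle; case: k => [|k]; first by rewrite addn0 leqnn subnn.
by rewrite addnS ltnNge leq_addr /= -addnS (addnC n) addnK.
Qed.

Lemma bwd_fwd (R : realType) d (A : nat -> 'M[R]_d) n k :
  (forall n, A n \in unitmx) -> bwd A n k *m fwd A n k = 1%:M.
Proof.
move=> hA; elim: k => [|k IH] /=; first by rewrite mul1mx.
by rewrite mulmxA -(mulmxA (bwd A n k)) mulVmx // mulmx1.
Qed.

Lemma fwd_bwd (R : realType) d (A : nat -> 'M[R]_d) n k :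
  (forall n, A n \in unitmx) -> fwd A n k *m bwd A n k = 1%:M.
Proof.
move=> hA; elim: k => [|k IH] /=; first by rewrite mul1mx.
by rewrite mulmxA -(mulmxA (A _)) IH mulmx1 mulmxV.
Qed.

Lemma fwd_scale (R : realType) d (A : nat -> 'M[R]_d) (c : R) n k :
  fwd (fun n => c *: A n) n k = c ^+ k *: fwd A n k.
Proof.
elim: k => [|k IH] /=; first by rewrite scale1r.
by rewrite IH -scalemxAl -scalemxAr scalerA exprS.
Qed.

Lemma bwd_scale (R : realType) d (A : nat -> 'M[R]_d) (c : R) n k :
  (forall n, A n \in unitmx) -> c != 0 ->
  bwd (fun n => c *: A n) n k = c^-1 ^+ k *: bwd A n k.
Proof.
move=> hA c0; elim: k => [|k IH] /=; first by rewrite scale1r.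
rewrite IH invmxZ; last by rewrite unitmxZ ?unitfE.
by rewrite -scalemxAl -scalemxAr scalerA exprSr.
Qed.

Lemma fwd_comm (R : realType) d (A P : nat -> 'M[R]_d) n k :
  (forall n, A n *m P n = P n.+1 *m A n) ->
  P (n + k)%N *m fwd A n k = fwd A n k *m P n.
Proof.
move=> hc; elim: k => [|k IH] /=; first by rewrite addn0 mul1mx mulmx1.
by rewrite addnS mulmxA -hc -mulmxA IH mulmxA.
Qed.

Lemma bwd_comm (R : realType) d (A P : nat -> 'M[R]_d) n k :
  (forall n, A n \in unitmx) ->
  (forall n, A n *m P n = P n.+1 *m A n) ->
  P n *m bwd A n k = bwd A n k *m P (n + k)%N.
Proof.
move=> hA hc.
have h := fwd_comm n k hc.
transitivity ((bwd A n k *m fwd A n k) *m P n *m bwd A n k).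
  by rewrite bwd_fwd // mul1mx.
rewrite -(mulmxA (bwd A n k)) -h !mulmxA -(mulmxA _ (fwd A n k)).
by rewrite fwd_bwd // mulmx1.
Qed.

From mathcomp Require Import ring lra.

Lemma subDnK n k : (n + k - n)%N = k.
Proof. by rewrite addnC addnK. Qed.

Lemma nrm_ge0 (R : realType) d (N : 'cV[R]_d -> R) x : is_norm N -> 0 <= N x.
Proof. by case. Qed.
Lemma nrm_eq0 (R : realType) d (N : 'cV[R]_d -> R) x : is_norm N -> N x = 0 -> x = 0.
Proof. by case=> _ h _ _; apply: h. Qed.
Lemma nrmZ (R : realType) d (N : 'cV[R]_d -> R) c x : is_norm N -> N (c *: x) = `|c| * N x.
Proof. by case. Qed.
Lemma nrmD (R : realType) d (N : 'cV[R]_d -> R) x y : is_norm N -> N (x + y) <= N x + N y.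
Proof. by case. Qed.
Lemma nrmN (R : realType) d (N : 'cV[R]_d -> R) x : is_norm N -> N (- x) = N x.
Proof. by move=> h; rewrite -scaleN1r nrmZ // normrN normr1 mul1r. Qed.
Lemma nrmB (R : realType) d (N : 'cV[R]_d -> R) x y : is_norm N -> N (x - y) <= N x + N y.
Proof. by move=> h; rewrite -(nrmN y h) nrmD. Qed.

Lemma powE (R : realType) (s : R) k : 0 < s -> s ^+ k = expR (ln s * k%:R).
Proof. by move=> s0; rewrite mulrC expRM_natl lnK // posrE. Qed.

Lemma powVE (R : realType) (s : R) k : 0 < s -> s^-1 ^+ k = expR (- ln s * k%:R).
Proof. by move=> s0; rewrite powE ?invr_gt0 // lnV // posrE. Qed.

Lemma scale_bound (R : realType) (e b K X Y : R) :
  expR e * Y <= K * expR b * X -> Y <= K * expR (b - e) * X.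
Proof.
move=> h; have e0 : 0 <= expR (- e) by exact/ltW/expR_gt0.
have := ler_wpM2l e0 h; rewrite mulrA -expRD addNr expR0 mul1r.
by move=> h2; apply: (le_trans h2); rewrite expRD; rewrite le_eqVlt; apply/orP; left; apply/eqP; ring.
Qed.

Lemma expR_scale (R : realType) (e b K X : R) :
  expR e * (K * expR b * X) = K * expR (b + e) * X.
Proof. rewrite expRD; ring. Qed.

Lemma bound_mono (R : realType) (K K' e e' X : R) : 0 <= K -> K <= K' -> e <= e' -> 0 <= X ->
  K * expR e * X <= K' * expR e' * X.
Proof.
move=> K0 KK ee X0; apply: ler_wpM2r => //; apply: ler_pM => //; first exact/ltW/expR_gt0.
by rewrite ler_expR.
Qed.

Lemma lin_le (R : realType) (p q : R) k : p <= q -> p * k%:R <= q * k%:R.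
Proof. by move=> h; apply: ler_wpM2r. Qed.

Lemma eqle (R : realType) (x y : R) : x = y -> x <= y.
Proof. by move=> ->. Qed.

Definition dich (R : realType) d (A P : nat -> 'M[R]_d) (N : nat -> 'cV[R]_d -> R)
  (K al ga : R) :=
 [/\ 0 < K, (forall n, P n *m P n = P n), (forall n, A n *m P n = P n.+1 *m A n),
   (forall n k x, N (n + k)%N (fwd A n k *m (P n *m x)) <= K * expR (al * k%:R) * N n x) &
   (forall n k x, N n (bwd A n k *m ((1%:M - P (n + k)%N) *m x))
        <= K * expR (ga * k%:R) * N (n + k)%N x)].

Lemma C1 (R : realType) d (A : nat -> 'M[R]_d) (N : nat -> 'cV[R]_d -> R) (s : R) :
  0 < s -> (forall n, A n \in unitmx) -> (forall n, is_norm (N n)) ->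
  strong_ED (fun n => s^-1 *: A n) N ->
  exists P K al ga, dich A P N K al ga /\ al < ln s /\ ga + ln s < 0.
Proof.
move=> s0 hA hN [K [a [lam [P [K0 l0 la [PP PC] B]]]]].
have c0 : s^-1 != 0 by rewrite invr_eq0 gt_eqF.
exists P, K, (ln s - lam), (- ln s - lam); split; last by split; lra.
split => //.
- move=> n; have := PC n; rewrite -scalemxAl -scalemxAr; exact: scalerI.
- move=> n k x; have [+ _ _ _] := B (n + k)%N n x (leq_addr _ _).
  rewrite subDnK cocycle_fwd fwd_scale -scalemxAl nrmZ // powVE // gtr0_norm ?expR_gt0 //.
  move/scale_bound=> h; apply: (le_trans h); apply: eqle; congr (_ * expR _ * _); ring.
- move=> n k x; have [_ + _ _] := B (n + k)%N n x (leq_addr _ _).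
  rewrite subDnK cocycle_bwd bwd_scale // invrK -scalemxAl nrmZ // powE // gtr0_norm ?expR_gt0 //.
  move/scale_bound=> h; apply: (le_trans h); apply: eqle; congr (_ * expR _ * _); ring.
Qed.

Definition growth (R : realType) d (A : nat -> 'M[R]_d) (N : nat -> 'cV[R]_d -> R) :=
  exists K a : R, [/\ 0 < K, 0 < a &
     forall (m n : nat) (x : 'cV[R]_d), (n <= m)%N ->
       N m (cocycle A m n *m x) <= K * expR (a * (m - n)%:R) * N n x /\
       N n (cocycle A n m *m x) <= K * expR (a * (m - n)%:R) * N m x].

Lemma C2 (R : realType) d (A : nat -> 'M[R]_d) (N : nat -> 'cV[R]_d -> R) (s : R) P K al ga :
  0 < s -> (forall n, A n \in unitmx) -> (forall n, is_norm (N n)) ->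
  growth A N -> dich A P N K al ga -> al < ln s -> ga + ln s < 0 ->
  strong_ED (fun n => s^-1 *: A n) N.
Proof.
move=> s0 hA hN [K0 [a0 [K00 a00 G]]] [Kp PP PC Bs Bu] als gas.
have c0 : s^-1 != 0 by rewrite invr_eq0 gt_eqF.
pose lam := Num.min (ln s - al) (- (ga + ln s)).
have lam0 : 0 < lam by rewrite lt_min; apply/andP; split; lra.
have lam1 : lam <= ln s - al by rewrite ge_min lexx.
have lam2 : lam <= - (ga + ln s) by rewrite ge_min lexx orbT.
pose a := Num.max lam (a0 + `|ln s|).
have aa1 : lam <= a by rewrite le_max lexx.
have aa2 : a0 + `|ln s| <= a by rewrite le_max lexx orbT.
have ls1 : ln s <= `|ln s| by exact: ler_norm.
have ls2 : - ln s <= `|ln s| by rewrite -normrN; exact: ler_norm.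
exists (K + K0), a, lam, P; split => //; first by rewrite addr_gt0.
- split => // n; rewrite -scalemxAl -scalemxAr; congr (_ *: _); exact: PC.
move=> m n x /subnKC <-; set k := (m - n)%N.
have Kle : K <= K + K0 by lra.
have K0le : K0 <= K + K0 by lra.
have [G1 G2] := G (n + k)%N n x (leq_addr _ _).
rewrite subDnK cocycle_fwd cocycle_bwd in G1 G2.
rewrite subDnK cocycle_fwd cocycle_bwd fwd_scale bwd_scale // invrK.
rewrite -!scalemxAl !nrmZ // powVE // powE // !gtr0_norm ?expR_gt0 //.
have ek : 0 <= expR (- ln s * k%:R) by exact/ltW/expR_gt0.
have ek' : 0 <= expR (ln s * k%:R) by exact/ltW/expR_gt0.
split.
- apply: le_trans (ler_wpM2l ek (Bs n k x)) _; rewrite expR_scale.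
  apply: bound_mono; rewrite ?nrm_ge0 //; first exact: ltW.
  rewrite -mulrDl; apply: lin_le; lra.
- apply: le_trans (ler_wpM2l ek' (Bu n k x)) _; rewrite expR_scale.
  apply: bound_mono; rewrite ?nrm_ge0 //; first exact: ltW.
  rewrite -mulrDl; apply: lin_le; lra.
- apply: le_trans (ler_wpM2l ek G1) _; rewrite expR_scale.
  apply: bound_mono; rewrite ?nrm_ge0 //; first exact: ltW.
  rewrite -mulrDl; apply: lin_le; lra.
- apply: le_trans (ler_wpM2l ek' G2) _; rewrite expR_scale.
  apply: bound_mono; rewrite ?nrm_ge0 //; first exact: ltW.
  rewrite -mulrDl; apply: lin_le; lra.
Qed.

Lemma vanish (R : realType) (z M mu : R) : 0 <= z -> mu < 0 ->
  (forall k : nat, z <= M * expR (mu * k%:R)) -> z = 0.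
Proof.
move=> z0 mu0 h; apply/eqP; rewrite eq_le z0 andbT; apply/negP => /negP; rewrite -ltNge => zp.
have M0 : z <= M by have := h 0%N; rewrite mulr0 expR0 mulr1.
have Mp : 0 < M by apply: lt_le_trans M0.
pose x := M / (z * - mu).
have x0 : 0 <= x by apply: divr_ge0; [exact: ltW|rewrite pmulr_rge0 //; lra].
have hk := archi_boundP x0; set k := Num.bound x in hk.
have := h k => hz.
have e1 : 1 + (- mu * k%:R) <= expR (- mu * k%:R) by exact: expR_ge1Dx.
have hz2 : z * expR (- mu * k%:R) <= M.
  have := ler_wpM2r (ltW (expR_gt0 (- mu * k%:R))) hz.
  rewrite -mulrA -expRD; have -> : mu * k%:R + - mu * k%:R = 0 by ring.
  by rewrite expR0 mulr1.
have hz3 : z * (1 + (- mu * k%:R)) <= M.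
  apply: le_trans hz2; apply: ler_wpM2l => //; exact: ltW.
have : M < z * (- mu) * k%:R.
  rewrite -ltr_pdivrMl; last by rewrite mulr_gt0 //; lra.
  by rewrite mulrC.
move=> h4; have : z * (1 + (- mu * k%:R)) = z + z * (- mu) * k%:R by ring.
lra.
Qed.

Lemma S_rE (R : realType) d (A : nat -> 'M[R]_d) (N : nat -> 'cV[R]_d -> R) (s : R) n v :
  0 < s ->
  S_r A N s n v <-> exists C, forall k, expR (- ln s * k%:R) * N (n + k)%N (fwd A n k *m v) <= C.
Proof.
move=> s0; split => -[C hC]; exists C.
- move=> k; have := hC (n + k)%N (leq_addr _ _).
  by rewrite subDnK cocycle_fwd -exprVn powVE.
- move=> m /subnKC <-; rewrite subDnK cocycle_fwd -exprVn powVE //; exact: hC.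
Qed.

Lemma QQ (R : realType) d (P : 'M[R]_d) : P *m P = P -> (1%:M - P) *m (1%:M - P) = 1%:M - P.
Proof.
by move=> h; rewrite mulmxBl mul1mx mulmxBr mulmx1 h subrr subr0.
Qed.

Lemma S_char (R : realType) d (A : nat -> 'M[R]_d) (N : nat -> 'cV[R]_d -> R) (s : R) P K al ga :
  0 < s -> (forall n, A n \in unitmx) -> (forall n, is_norm (N n)) ->
  dich A P N K al ga -> al < ln s -> ga + ln s < 0 ->
  forall n, S_r A N s n = [set v | P n *m v = v].
Proof.
move=> s0 hA hN [Kp PP PC Bs Bu] als gas n.
apply/seteqP; split => v /=; last first.
  move=> Pv; apply/S_rE => //; exists (K * N n v) => k.
  rewrite -{1}Pv; apply: le_trans (ler_wpM2l (ltW (expR_gt0 _)) (Bs n k v)) _.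
  rewrite expR_scale.
  apply: le_trans (@bound_mono _ K K _ 0 _ _ _ _ _) _; first exact: ltW.
  - exact: lexx.
  - rewrite -mulrDl -(mul0r (k%:R : R)); apply: lin_le; lra.
  - exact: nrm_ge0.
  by rewrite expR0 mulr1.
move/(S_rE _ _ _ _ s0) => [C hC].
pose w := (1%:M - P n) *m v.
suff : w = 0 by move/eqP; rewrite /w mulmxBl mul1mx subr_eq0 => /eqP <-.
apply: (nrm_eq0 (hN n)).
apply: (@vanish _ _ (K * `|C| + K * K * N n v) (ga + ln s)) => //; first exact: nrm_ge0.
move=> k.
pose y := fwd A n k *m w.
have wy : w = bwd A n k *m ((1%:M - P (n + k)%N) *m y).
  have e : (1%:M - P (n + k)%N) *m fwd A n k = fwd A n k *m (1%:M - P n).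
    by rewrite mulmxBl mul1mx (fwd_comm _ _ PC) mulmxBr mulmx1.
  have e2 : (1%:M - P n) *m w = w by rewrite /w mulmxA QQ.
  by rewrite /y (mulmxA (1%:M - _)) e -(mulmxA (fwd A n k)) e2 mulmxA bwd_fwd // mul1mx.
have h1 := Bu n k y; rewrite -wy in h1.
have hy : N (n + k)%N y <= expR (ln s * k%:R) * C + K * expR (al * k%:R) * N n v.
  rewrite /y /w mulmxBl mul1mx mulmxBr; apply: le_trans (nrmB _ _ (hN _)) _.
  apply: lerD; last exact: Bs.
  have := ler_wpM2l (ltW (expR_gt0 (ln s * k%:R))) (hC k).
  by rewrite mulrA -expRD mulNr addrN expR0 mul1r.
apply: le_trans h1 _.
have e1 : 0 <= K * expR (ga * k%:R) by rewrite mulr_ge0 ?expR_ge0 //; exact: ltW.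
apply: le_trans (ler_wpM2l e1 hy) _.
have C1 : C <= `|C| := ler_norm C.
have Nv : 0 <= N n v := nrm_ge0 _ (hN n).
have E1 : expR (ga * k%:R) * expR (al * k%:R) <= expR ((ga + ln s) * k%:R).
  rewrite -expRD ler_expR -mulrDl; apply: lin_le; lra.
have E2 : expR (ga * k%:R) * expR (ln s * k%:R) = expR ((ga + ln s) * k%:R).
  by rewrite -expRD mulrDl.
have E0 : 0 <= expR ((ga + ln s) * k%:R) := expR_ge0 _.
have K0 : 0 <= K by exact: ltW.
rewrite mulrDr mulrDl.
apply: lerD.
  have -> : K * expR (ga * k%:R) * (expR (ln s * k%:R) * C)
     = (K * (expR (ga * k%:R) * expR (ln s * k%:R))) * C by ring.
  rewrite E2.
  have -> : K * `|C| * expR ((ga + ln s) * k%:R) = K * (expR ((ga + ln s) * k%:R) * `|C|) by ring.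
  rewrite -mulrA; apply: ler_wpM2l => //; apply: ler_wpM2l => //.
have -> : K * expR (ga * k%:R) * (K * expR (al * k%:R) * N n v)
   = (K * K * N n v) * (expR (ga * k%:R) * expR (al * k%:R)) by ring.
by apply: ler_wpM2l => //; rewrite !mulr_ge0.
Qed.

Lemma im_step (R : realType) d (A P : nat -> 'M[R]_d) n k (v : 'cV[R]_d) :
  (forall n, A n \in unitmx) -> (forall n, A n *m P n = P n.+1 *m A n) ->
  (P (n + k)%N *m v = v <-> P n *m (bwd A n k *m v) = bwd A n k *m v).
Proof.
move=> hA hc; rewrite mulmxA (bwd_comm _ _ hA hc) -mulmxA; split; first by move=> ->.
move=> h; have := congr1 (fun u : 'cV[R]_d => fwd A n k *m u) h => /=.
by rewrite !mulmxA fwd_bwd // !mul1mx.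
Qed.

Lemma im_prop (R : realType) d (A P1 P2 : nat -> 'M[R]_d) n k :
  (forall n, A n \in unitmx) -> (forall n, A n *m P1 n = P1 n.+1 *m A n) ->
  (forall n, A n *m P2 n = P2 n.+1 *m A n) ->
  (forall v : 'cV[R]_d, P1 n *m v = v <-> P2 n *m v = v) <->
  (forall v : 'cV[R]_d, P1 (n + k)%N *m v = v <-> P2 (n + k)%N *m v = v).
Proof.
move=> hA h1 h2; split => H v.
- rewrite (im_step _ _ _ hA h1) (im_step _ _ _ hA h2); exact: H.
- have -> : v = bwd A n k *m (fwd A n k *m v) by rewrite mulmxA bwd_fwd // mul1mx.
  rewrite -(im_step _ _ _ hA h1) -(im_step _ _ _ hA h2); exact: H.
Qed.

Lemma im_all (R : realType) d (A P1 P2 : nat -> 'M[R]_d) n0 :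
  (forall n, A n \in unitmx) -> (forall n, A n *m P1 n = P1 n.+1 *m A n) ->
  (forall n, A n *m P2 n = P2 n.+1 *m A n) ->
  (forall v : 'cV[R]_d, P1 n0 *m v = v <-> P2 n0 *m v = v) ->
  forall n (v : 'cV[R]_d), P1 n *m v = v <-> P2 n *m v = v.
Proof.
move=> hA h1 h2 H n.
have H1 := (proj1 (im_prop n0 n hA h1 h2)) H.
rewrite addnC in H1.
exact: (proj2 (im_prop n n0 hA h1 h2)) H1.
Qed.

Lemma notSigma (R : realType) d (A : nat -> 'M[R]_d) (N : nat -> 'cV[R]_d -> R) s :
  0 < s -> ~ Sigma_ED A N s -> strong_ED (fun n => s^-1 *: A n) N.
Proof.
move=> s0 h; case: (pselect (strong_ED (fun n => s^-1 *: A n) N)) => // h'.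
by exfalso; apply: h.
Qed.

Lemma dir_ab (R : realType) d (A : nat -> 'M[R]_d) (N : nat -> 'cV[R]_d -> R) r1 r2 n0 :
  (forall n, A n \in unitmx) -> (forall n, is_norm (N n)) -> growth A N ->
  0 < r1 -> r1 < r2 -> ~ Sigma_ED A N r1 -> ~ Sigma_ED A N r2 ->
  S_r A N r1 n0 = S_r A N r2 n0 ->
  [set t | r1 <= t <= r2] `&` Sigma_ED A N = set0.
Proof.
move=> hA hN hG r10 r12 n1 n2 heq.
have r20 : 0 < r2 by apply: lt_trans r12.
have [P1 [K1 [al1 [ga1 [D1 [a1 g1]]]]]] := C1 r10 hA hN (notSigma r10 n1).
have [P2 [K2 [al2 [ga2 [D2 [a2 g2]]]]]] := C1 r20 hA hN (notSigma r20 n2).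
have S1 := S_char r10 hA hN D1 a1 g1; have S2 := S_char r20 hA hN D2 a2 g2.
case: D1 => Kp1 PP1 PC1 Bs1 Bu1; case: D2 => Kp2 PP2 PC2 Bs2 Bu2.
have H0 : forall v : 'cV[R]_d, P1 n0 *m v = v <-> P2 n0 *m v = v.
  move=> v; have := congr1 (fun S => S v) heq; rewrite S1 S2 /= => ->; by [].
have Hall := im_all hA PC1 PC2 H0.
apply/seteqP; split => t //= [/andP [rt1 rt2] [t0 nED]]; apply: nED.
have lt : ln r1 <= ln t by rewrite ler_ln // posrE.
have lt2 : ln t <= ln r2 by rewrite ler_ln // posrE.
have K2a : forall n x, N n ((1%:M - P2 n) *m x) <= K2 * N n x.
  move=> n x; have := Bu2 n 0%N x; by rewrite addn0 /= mul1mx mulr0 expR0 mulr1.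
apply: (@C2 _ _ _ _ _ P2 (K1 * (1 + K2) + K2) al1 ga2) => //; [|lra|lra].
split => //.
- by rewrite addr_gt0 // mulr_gt0 //; lra.
- move=> n k x.
  have e : P2 n *m x = P1 n *m (P2 n *m x).
    by apply/esym/(proj2 (Hall n _)); rewrite mulmxA PP2.
  rewrite e; apply: le_trans (Bs1 n k _) _.
  have hP : N n (P2 n *m x) <= (1 + K2) * N n x.
    have -> : P2 n *m x = x - (1%:M - P2 n) *m x.
      by rewrite mulmxBl mul1mx opprB addrC subrK.
    apply: le_trans (nrmB _ _ (hN n)) _; have := K2a n x; lra.
  have e0 : 0 <= K1 * expR (al1 * k%:R) by rewrite mulr_ge0 ?expR_ge0 //; exact: ltW.
  apply: le_trans (ler_wpM2l e0 hP) _.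
  have -> : K1 * expR (al1 * k%:R) * ((1 + K2) * N n x)
     = (K1 * (1 + K2)) * expR (al1 * k%:R) * N n x by ring.
  apply: bound_mono; [|lra|exact: lexx|exact: nrm_ge0].
  rewrite mulr_ge0 //; lra.
- move=> n k x; apply: le_trans (Bu2 n k x) _.
  apply: bound_mono => //; [exact: ltW | | exact: nrm_ge0].
  have : 0 <= K1 * (1 + K2) by rewrite mulr_ge0 //; lra.
  lra.
Qed.

Lemma loc (R : realType) d (A : nat -> 'M[R]_d) (N : nat -> 'cV[R]_d -> R) s :
  (forall n, A n \in unitmx) -> (forall n, is_norm (N n)) -> growth A N ->
  0 < s -> ~ Sigma_ED A N s ->
  exists2 del : R, 0 < del & forall s', s - del < s' -> s' < s + del ->
    [/\ 0 < s', ~ Sigma_ED A N s' & forall n, S_r A N s' n = S_r A N s n].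
Proof.
move=> hA hN hG s0 ns.
have [P [K [al [ga [D [a1 g1]]]]]] := C1 s0 hA hN (notSigma s0 ns).
have e1 : expR al < s by rewrite -[X in _ < X](lnK (x:=s)) ?posrE // ltr_expR.
have e2 : s < expR (- ga) by rewrite -[X in X < _](lnK (x:=s)) ?posrE // ltr_expR; lra.
exists (Num.min (s - expR al) (expR (- ga) - s)).
  by rewrite lt_min; apply/andP; split; lra.
move=> s' h1 h2.
have m1 : Num.min (s - expR al) (expR (- ga) - s) <= s - expR al by rewrite ge_min lexx.
have m2 : Num.min (s - expR al) (expR (- ga) - s) <= expR (- ga) - s by rewrite ge_min lexx orbT.
have p1 : expR al < s' by lra.
have p2 : s' < expR (- ga) by lra.
have s'0 : 0 < s' by apply: lt_trans p1; exact: expR_gt0.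
have q1 : al < ln s' by rewrite -(expRK al) ltr_ln // posrE // expR_gt0.
have q2 : ln s' < - ga by rewrite -(expRK (- ga)) ltr_ln // posrE // expR_gt0.
split => //.
  move=> [_]; apply; apply: (C2 s'0 hA hN hG D) => //; lra.
by move=> n; rewrite (S_char s'0 hA hN D) ?(S_char s0 hA hN D) //; lra.
Qed.

Lemma dir_ba (R : realType) d (A : nat -> 'M[R]_d) (N : nat -> 'cV[R]_d -> R) r1 r2 :
  (forall n, A n \in unitmx) -> (forall n, is_norm (N n)) -> growth A N ->
  0 < r1 -> r1 < r2 ->
  [set t | r1 <= t <= r2] `&` Sigma_ED A N = set0 ->
  forall n, S_r A N r1 n = S_r A N r2 n.
Proof.
move=> hA hN hG r10 r12 hS.
pose E := [set s | r1 <= s <= r2 /\ forall n, S_r A N s n = S_r A N r1 n].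
have Er1 : E r1 by split => //; rewrite lexx ltW.
have ub : ubound E r2 by move=> s [/andP []].
have hsup : has_sup E by split; [exists r1 | exists r2].
set s := sup E.
have s1 : r1 <= s by exact: (sup_upper_bound hsup).
have s2 : s <= r2 by apply: ge_sup => //; exists r1.
have s0 : 0 < s by apply: lt_le_trans s1.
have ns : ~ Sigma_ED A N s.
  move=> hs; have : ([set t | r1 <= t <= r2] `&` Sigma_ED A N) s.
    by split => //=; apply/andP; split.
  by rewrite hS.
have [del del0 hdel] := loc hA hN hG s0 ns.
have [e Ee he] := sup_adherent del0 hsup.
have es : e <= s by exact: (sup_upper_bound hsup).
have [_ _ Se] := hdel e he ltac:(lra).
case: Ee => _ Ee.
have Ss : forall n, S_r A N s n = S_r A N r1 n by move=> n; rewrite -Se Ee.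
have : ~ s < r2.
  move=> sr.
  pose s'' := Num.min (s + del / 2) r2.
  have m1 : s'' <= s + del / 2 by rewrite ge_min lexx.
  have m2 : s'' <= r2 by rewrite ge_min lexx orbT.
  have m3 : s < s'' by rewrite lt_min; apply/andP; split; lra.
  have [_ _ S''] := hdel s'' ltac:(lra) ltac:(lra).
  have : E s'' by split; [apply/andP; split; lra | move=> n; rewrite S'' Ss].
  move/sup_upper_bound => /(_ hsup); rewrite -/s; lra.
move=> nlt; have sr2 : s = r2 by lra.
by move=> n; rewrite -sr2 Ss.
Qed.

Unset Implicit Arguments. Set Strict Implicit.

Theorem lemma7p5 (R : realType) (d : nat) (A : nat -> 'M[R]_d)
  (N : nat -> 'cV[R]_d -> R) :
  (forall n, A n \in unitmx) ->
  (forall n, is_norm (N n)) ->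
  (exists K a : R, [/\ 0 < K, 0 < a &
     forall (m n : nat) (x : 'cV[R]_d), (n <= m)%N ->
       N m (cocycle A m n *m x) <= K * expR (a * (m - n)%:R) * N n x /\
       N n (cocycle A n m *m x) <= K * expR (a * (m - n)%:R) * N m x]) ->
  forall r1 r2 : R, 0 < r1 -> r1 < r2 ->
    ~ Sigma_ED A N r1 -> ~ Sigma_ED A N r2 ->
    ((exists n : nat, S_r A N r1 n = S_r A N r2 n) <->
       [set t | r1 <= t <= r2] `&` Sigma_ED A N = set0) /\
    ((forall n : nat, S_r A N r1 n = S_r A N r2 n) <->
       [set t | r1 <= t <= r2] `&` Sigma_ED A N = set0).
Proof.
move=> hA hN hG r1 r2 r10 r12 n1 n2.
have hab : (exists n : nat, S_r A N r1 n = S_r A N r2 n) ->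
    [set t | r1 <= t <= r2] `&` Sigma_ED A N = set0.
  by move=> [n0 h]; exact: (dir_ab hA hN hG r10 r12 n1 n2 h).
have hba := dir_ba hA hN hG r10 r12.
split; split => //.
- by move=> h; exists 0%N; exact: hba.
- by move=> h; apply: hab; exists 0%N; exact: h.
Qed.
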